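(* Let $(\boldsymbol{\beta},\mathbf{u})$ be a domain index, i.e. $(\boldsymbol{\beta},\mathbf{u}) \in \operatorname{argmax}_{\boldsymbol{\beta}',\mathbf{u}'} \big[I_{\mathbf{x}}(\boldsymbol{\beta}',\mathbf{u}') + I_y(\boldsymbol{\beta}')\big]$, the argmax being over domain-associated variables $\boldsymbol{\beta}'$ and data-associated variables $\mathbf{u}'$. Then $I_{\mathbf{x}}(\boldsymbol{\beta},\mathbf{u}) = H(\mathbf{x})$ and $I_y(\boldsymbol{\beta}) = I(y;\mathbf{x})$.
   Context: Data $\mathbf{x}$, label $y$ and a domain variable are given random variables. A domain-associated variable $\boldsymbol{\beta}$ is one that takes the same value for all data in a given domain (this includes constants); a data-associated variable $\mathbf{u}$ may take a different value for each data point (this includes constants). A data encoding $\mathbf{z}$ is a random variable obtained from $\mathbf{x}$ through a conditional distribution $q(\mathbf{z}\mid\mathbf{x})$ (so $\mathbf{z}$ is conditionally independent of all other variables given $\mathbf{x}$; e.g. $\mathbf{z}=\mathbf{x}$ is allowed). Data orthogonal information: $I_{\mathbf{x}}(\boldsymbol{\beta},\mathbf{u}) := \max_{\mathbf{z}:\,\mathbf{z}\perp\!\!\!\perp\boldsymbol{\beta}} I(\mathbf{x};\mathbf{u},\boldsymbol{\beta},\mathbf{z})$; label orthogonal information: $I_y(\boldsymbol{\beta}) := \max_{\mathbf{z}:\,\mathbf{z}\perp\!\!\!\perp\boldsymbol{\beta}} I(y;\mathbf{z})$, the maxima being over data encodings $\mathbf{z}$ independent of $\boldsymbol{\beta}$.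 $H(\mathbf{x})$ is the (Shannon) entropy of $\mathbf{x}$; the variables are taken discrete so that $I(\mathbf{x};\mathbf{x})=H(\mathbf{x})$. *)

(* Defs.v *)
From HB Require Import structures.
From mathcomp Require Import all_boot all_order all_algebra.
From mathcomp Require Import reals exp.
Set Implicit Arguments. Unset Strict Implicit. Unset Printing Implicit Defensive.
Import Order.TTheory GRing.Theory Num.Theory.
Local Open Scope ring_scope.

Definition is_pmf (R : realType) (T : finType) (p : T -> R) : Prop :=
  (forall t, 0 <= p t) /\ \sum_(t : T) p t = 1.

Definition entropy (R : realType) (T : finType) (p : T -> R) : R :=
  - \sum_(t : T) (if p t == 0 then 0 else p t * ln (p t)).

Definition mutinfo (R : realType) (A B : finType) (P : A -> B -> R) : R :=
  \sum_(a : A) \sum_(b : B)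
    (if P a b == 0 then 0
     else P a b * ln (P a b / ((\sum_(b' : B) P a b') * (\sum_(a' : A) P a' b)))).

(* The setting: data x : X, label y : Y, domain d : D with joint pmf p x y d.
   A domain-associated variable is beta = f d for f : D -> Bt (constants included).
   A data-associated variable u is given by a conditional pmf qu x y d u
   (arbitrary dependence on the data point, constants included).
   A data encoding z is given by a conditional pmf qz x z. The joint law of
   (x,y,d,u,z) is p x y d * qu x y d u * qz x z, so z is conditionally
   independent of everything else given x. *)

Definition px (R : realType) (X Y D : finType) (p : X -> Y -> D -> R) (x : X) : R :=
  \sum_(y : Y) \sum_(d : D) p x y d.

Definition pyx (R : realType) (X Y D : finType) (p : X -> Y -> D -> R) (y : Y) (x : X) : R :=
  \sum_(d : D) p x y d.

Definition is_encoding (R : realType) (X Z : finType) (qz : X -> Z -> R) : Prop :=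
  forall x, is_pmf (qz x).

Definition pzb (R : realType) (X Y D Bt Z : finType) (p : X -> Y -> D -> R)
  (f : D -> Bt) (qz : X -> Z -> R) (z : Z) (b : Bt) : R :=
  \sum_(x : X) \sum_(y : Y) \sum_(d : D) (if f d == b then p x y d * qz x z else 0).

Definition indep_zb (R : realType) (X Y D Bt Z : finType) (p : X -> Y -> D -> R)
  (f : D -> Bt) (qz : X -> Z -> R) : Prop :=
  forall z b, pzb p f qz z b =
    (\sum_(b' : Bt) pzb p f qz z b') * (\sum_(z' : Z) pzb p f qz z' b).

Definition px_ubz (R : realType) (X Y D Bt U Z : finType) (p : X -> Y -> D -> R)
  (f : D -> Bt) (qu : X -> Y -> D -> U -> R) (qz : X -> Z -> R)
  (x : X) (w : U * Bt * Z) : R :=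
  \sum_(y : Y) \sum_(d : D)
    (if f d == w.1.2 then p x y d * qu x y d w.1.1 * qz x w.2 else 0).

Definition pyz (R : realType) (X Y D Z : finType) (p : X -> Y -> D -> R)
  (qz : X -> Z -> R) (y : Y) (z : Z) : R :=
  \sum_(x : X) \sum_(d : D) p x y d * qz x z.

Definition is_Ix (R : realType) (X Y D Bt U : finType) (p : X -> Y -> D -> R)
  (f : D -> Bt) (qu : X -> Y -> D -> U -> R) (v : R) : Prop :=
  (exists (Z : finType) (qz : X -> Z -> R),
      [/\ is_encoding qz, indep_zb p f qz & v = mutinfo (px_ubz p f qu qz)]) /\
  (forall (Z : finType) (qz : X -> Z -> R),
      is_encoding qz -> indep_zb p f qz -> mutinfo (px_ubz p f qu qz) <= v).

Definition is_Iy (R : realType) (X Y D Bt : finType) (p : X -> Y -> D -> R)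
  (f : D -> Bt) (v : R) : Prop :=
  (exists (Z : finType) (qz : X -> Z -> R),
      [/\ is_encoding qz, indep_zb p f qz & v = mutinfo (pyz p qz)]) /\
  (forall (Z : finType) (qz : X -> Z -> R),
      is_encoding qz -> indep_zb p f qz -> mutinfo (pyz p qz) <= v).

Definition is_data_var (R : realType) (X Y D U : finType)
  (qu : X -> Y -> D -> U -> R) : Prop :=
  forall x y d, is_pmf (qu x y d).

Definition is_domain_index (R : realType) (X Y D Bt U : finType)
  (p : X -> Y -> D -> R) (f : D -> Bt) (qu : X -> Y -> D -> U -> R) : Prop :=
  exists vx vy : R,
    [/\ is_Ix p f qu vx, is_Iy p f vy &
      forall (Bt' U' : finType) (f' : D -> Bt') (qu' : X -> Y -> D -> U' -> R),
        is_data_var qu' ->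
        forall vx' vy' : R, is_Ix p f' qu' vx' -> is_Iy p f' vy' ->
          vx' + vy' <= vx + vy].

(* Main.v *)
Require Import Defs.
From HB Require Import structures.
From mathcomp Require Import all_boot all_order all_algebra.
From mathcomp Require Import reals exp.
From mathcomp Require Import ring lra.
From Stdlib Require Import FunctionalExtensionality.
Import Order.TTheory GRing.Theory Num.Theory.
Set Implicit Arguments. Unset Strict Implicit.
Local Open Scope ring_scope.

Lemma ln_le_sub1 (R : realType) (t : R) : 0 < t -> ln t <= t - 1.
Proof.
move=> t0; have := @le_ln1Dx R (t - 1).
by rewrite [1 + _]addrC subrK; apply; lra.
Qed.

Lemma le_sum1 (R : realType) (I : finType) (F : I -> R) i :
  (forall j, 0 <= F j) -> F i <= \sum_j F j.
Proof. by move=> h; rewrite (bigD1 i) //= lerDl sumr_ge0. Qed.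

Lemma term_le (R : realType) (a b c : R) : 0 < c -> 0 <= a -> 0 <= b ->
  (a != 0 -> 0 < b) -> a * ln c + a - b * c <= (if a == 0 then 0 else a * ln (a / b)).
Proof.
move=> c0 a0 b0 hab; case: eqP => [->|/eqP an0].
  by rewrite mul0r add0r sub0r oppr_le0 mulr_ge0 // ltW.
have ap : 0 < a by rewrite lt_def an0.
have bp := hab an0.
have hc : ln c = ln (a / b) + ln (b * c / a).
  rewrite -lnM ?posrE ?divr_gt0 ?mulr_gt0 //; congr ln; field.
  by apply/andP; split; rewrite gt_eqF.
have hL := @ln_le_sub1 _ _ (divr_gt0 (mulr_gt0 bp c0) ap).
have hm : a * ln (b * c / a) <= b * c - a.
  have -> : b * c - a = a * (b * c / a - 1) by field; rewrite gt_eqF.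
  by rewrite ler_wpM2l // ltW.
rewrite hc mulrDr; lra.
Qed.

Lemma logsum (R : realType) (I : finType) (a b : I -> R) :
  (forall i, 0 <= a i) -> (forall i, 0 <= b i) -> (forall i, a i != 0 -> 0 < b i) ->
  (if \sum_i a i == 0 then 0 else (\sum_i a i) * ln ((\sum_i a i) / (\sum_i b i)))
  <= \sum_i (if a i == 0 then 0 else a i * ln (a i / b i)).
Proof.
move=> a0 b0 hab; case: eqP => [A0|/eqP A0].
  rewrite big1 // => i _.
  by rewrite (psumr_eq0P (fun j _ => a0 j) A0) ?eqxx.
case: (pickP (fun i => a i != 0)) => [i ai|none]; last first.
  by case/eqP: A0; apply: big1 => i _; move/negbFE/eqP: (none i).
have Bp : 0 < \sum_i b i by apply: lt_le_trans (hab _ ai) (@le_sum1 _ _ b i b0).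
have Ap : 0 < \sum_i a i by rewrite lt_def A0 sumr_ge0.
set c := (\sum_i a i) / (\sum_i b i).
have cp : 0 < c by rewrite divr_gt0.
apply: le_trans (ler_sum _ (fun i _ => @term_le _ _ _ _ cp (a0 i) (b0 i) (@hab i))).
rewrite !big_split /= sumrN -!mulr_suml.
have -> : (\sum_i b i) * c = \sum_i a i by rewrite /c; field; rewrite gt_eqF.
lra.
Qed.

Lemma mutinfo_le_entropy (R : realType) (A B : finType) (P : A -> B -> R) :
  (forall a b, 0 <= P a b) -> mutinfo P <= entropy (fun a => \sum_b P a b).
Proof.
move=> P0; rewrite /mutinfo /entropy /= -sumrN; apply: ler_sum => a _.
set Pa := \sum_b P a b.
have -> : (if Pa == 0 then 0 else Pa * ln Pa) = Pa * ln Pa.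
  by case: eqP => // ->; rewrite mul0r.
rewrite /Pa mulr_suml -sumrN; apply: ler_sum => b _.
case: eqP => [->|/eqP Pn0]; first by rewrite mul0r oppr0.
have Pp : 0 < P a b by rewrite lt_def Pn0 P0.
have hPa : P a b <= \sum_b' P a b' by apply: (@le_sum1 _ _ (P a) b).
have hPb : P a b <= \sum_a' P a' b by apply: (@le_sum1 _ _ (fun a' => P a' b) a).
have Pap : 0 < \sum_b' P a b' by apply: lt_le_trans hPa.
have Pbp : 0 < \sum_a' P a' b by apply: lt_le_trans hPb.
rewrite -mulrN; apply: ler_wpM2l; first exact: ltW.
rewrite ln_div ?posrE ?mulr_gt0 // lnM ?posrE //.
have : ln (P a b) <= ln (\sum_a' P a' b) by rewrite ler_ln ?posrE.
lra.
Qed.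

Lemma dpi (R : realType) (Y Xt Z : finType) (J : Y -> Xt -> R) (q : Xt -> Z -> R) :
  (forall y x, 0 <= J y x) -> (forall x, is_pmf (q x)) ->
  mutinfo (fun y z => \sum_x J y x * q x z) <= mutinfo J.
Proof.
move=> J0 hq; rewrite /mutinfo /=.
set T := fun y x => if J y x == 0 then 0
   else J y x * ln (J y x / ((\sum_x' J y x') * (\sum_y' J y' x))).
have -> : \sum_y \sum_x T y x = \sum_y \sum_z \sum_x T y x * q x z.
  apply: eq_bigr => y _; rewrite exchange_big /=; apply: eq_bigr => x _.
  by rewrite -mulr_sumr (hq x).2 mulr1.
apply: ler_sum => y _; apply: ler_sum => z _.
have hy : \sum_z' \sum_x J y x * q x z' = \sum_x' J y x'.
  rewrite exchange_big; apply: eq_bigr => x _.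
  by rewrite -mulr_sumr (hq x).2 mulr1.
have hz : \sum_y' \sum_x J y' x * q x z = \sum_x (\sum_y' J y' x) * q x z.
  by rewrite exchange_big; apply: eq_bigr => x _; rewrite mulr_suml.
rewrite hy hz mulr_sumr.
have qge0 : forall x z, 0 <= q x z by move=> x z'; exact: (hq x).1.
have hle := @logsum R Xt (fun x => J y x * q x z)
  (fun x => (\sum_x' J y x') * ((\sum_y' J y' x) * q x z)) _ _ _.
apply: le_trans (hle _ _ _) _.
- by move=> x; rewrite mulr_ge0.
- by move=> x; rewrite !mulr_ge0 ?sumr_ge0.
- move=> x; rewrite mulf_eq0 negb_or => /andP[jn qn].
  have Jp : 0 < J y x by rewrite lt_def jn J0.
  have qp : 0 < q x z by rewrite lt_def qn qge0.
  rewrite !mulr_gt0 //.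
    by apply: lt_le_trans Jp (@le_sum1 _ _ (J y) x (J0 y)).
  by apply: lt_le_trans Jp (@le_sum1 _ _ (fun y' => J y' x) y (fun y' => J0 y' x)).
apply: ler_sum => x _; rewrite /T.
case: (eqVneq (J y x) 0) => [->|jn]; first by rewrite !(mul0r, eqxx).
idtac.
case: (eqVneq (q x z) 0) => [->|qn]; first by rewrite !(mulr0, eqxx).
rewrite mulf_eq0 (negbTE jn) (negbTE qn) /=.
set a := \sum_x' J y x'; set b := \sum_y' J y' x.
have -> : J y x * q x z / (a * (b * q x z)) = J y x / (a * b).
  by rewrite mulrA invfM -mulrA [q x z * _]mulrCA mulfV // mulr1.
by rewrite mulrAC.
Qed.

Lemma sum_unit (R : realType) (F : unit -> R) : \sum_(i : unit) F i = F tt.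
Proof. by rewrite (big_pred1 tt) // => -[]. Qed.

Lemma swap3 (R : realType) (I J K : finType) (F : I -> J -> K -> R) :
  \sum_i \sum_j \sum_k F i j k = \sum_j \sum_k \sum_i F i j k.
Proof. by rewrite exchange_big; apply: eq_bigr => j _; rewrite exchange_big. Qed.

Lemma sum_delta (R : realType) (I : finType) (x : I) (c : I -> R) :
  \sum_u (if u == x then c u else 0) = c x.
Proof. by rewrite -big_mkcond (big_pred1 x). Qed.

Lemma sum_pair (R : realType) (A B : finType) (G : A * B -> R) :
  \sum_w G w = \sum_a \sum_b G (a, b).
Proof. by rewrite pair_bigA; apply: eq_bigr => -[]. Qed.

Lemma marg_ubz (R : realType) (X Y D Bt U Z : finType) (p : X -> Y -> D -> R)
  (f : D -> Bt) (qu : X -> Y -> D -> U -> R) (qz : X -> Z -> R) :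
  is_data_var qu -> is_encoding qz ->
  forall x, \sum_w px_ubz p f qu qz x w = px p x.
Proof.
move=> hqu hqz x; rewrite sum_pair sum_pair.
rewrite /px_ubz /=.
have h1 : forall u b, \sum_z \sum_y' \sum_d' (if f d' == b then p x y' d' * qu x y' d' u * qz x z else 0)
   = \sum_y' \sum_d' (if f d' == b then p x y' d' * qu x y' d' u else 0).
  move=> u b; rewrite swap3; apply: eq_bigr => y' _; apply: eq_bigr => d' _.
  case: ifP => _; last by rewrite big1.
  by rewrite -mulr_sumr (hqz x).2 mulr1.
have h2 : forall u, \sum_b \sum_y' \sum_d' (if f d' == b then p x y' d' * qu x y' d' u else 0)
   = \sum_y' \sum_d' p x y' d' * qu x y' d' u.
  move=> u; rewrite swap3; apply: eq_bigr => y' _; apply: eq_bigr => d' _.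
  by rewrite -big_mkcond (big_pred1 (f d')) // => b; rewrite /= eq_sym.
under eq_bigr do under eq_bigr do rewrite h1.
under eq_bigr do rewrite h2.
rewrite swap3; apply: eq_bigr => y _; apply: eq_bigr => d _.
by rewrite -mulr_sumr (hqu x y d).2 mulr1.
Qed.

Lemma ubz_ge0 (R : realType) (X Y D Bt U Z : finType) (p : X -> Y -> D -> R)
  (f : D -> Bt) (qu : X -> Y -> D -> U -> R) (qz : X -> Z -> R) :
  (forall x y d, 0 <= p x y d) -> is_data_var qu -> is_encoding qz ->
  forall x w, 0 <= px_ubz p f qu qz x w.
Proof.
move=> p0 hqu hqz x w; apply: sumr_ge0 => y _; apply: sumr_ge0 => d _.
by case: ifP => _ //; rewrite !mulr_ge0 // ?(hqu x y d).1 ?(hqz x).1.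
Qed.

Lemma Ix_le (R : realType) (X Y D Bt U Z : finType) (p : X -> Y -> D -> R)
  (f : D -> Bt) (qu : X -> Y -> D -> U -> R) (qz : X -> Z -> R) :
  (forall x y d, 0 <= p x y d) -> is_data_var qu -> is_encoding qz ->
  mutinfo (px_ubz p f qu qz) <= entropy (px p).
Proof.
move=> p0 hqu hqz.
apply: le_trans (mutinfo_le_entropy (ubz_ge0 f p0 hqu hqz)) _.

have -> : (fun a => \sum_b px_ubz p f qu qz a b) = px p.
  by apply: functional_extensionality => a; exact: marg_ubz.
by [].
Qed.

Lemma Iy_le (R : realType) (X Y D Z : finType) (p : X -> Y -> D -> R)
  (qz : X -> Z -> R) :
  (forall x y d, 0 <= p x y d) -> is_encoding qz ->
  mutinfo (pyz p qz) <= mutinfo (pyx p).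
Proof.
move=> p0 hqz.
have -> : pyz p qz = fun y z => \sum_x pyx p y x * qz x z.
  apply: functional_extensionality => y; apply: functional_extensionality => z.
  by rewrite /pyz /pyx; apply: eq_bigr => x _; rewrite mulr_suml.
apply: dpi => // y x; apply: sumr_ge0 => d _; exact: p0.
Qed.

Lemma indep_unit (R : realType) (X Y D Z : finType) (p : X -> Y -> D -> R)
  (qz : X -> Z -> R) :
  (\sum_x \sum_y \sum_d p x y d = 1) -> is_encoding qz ->
  indep_zb p (fun _ : D => tt) qz.
Proof.
move=> p1 hqz z b; case: b; rewrite sum_unit.
suff -> : \sum_z' pzb p (fun _ : D => tt) qz z' tt = 1 by rewrite mulr1.
rewrite /pzb /= swap3 -p1; apply: eq_bigr => x _; apply: eq_bigr => y _.
rewrite exchange_big; apply: eq_bigr => d _.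
by rewrite -mulr_sumr (hqz x).2 mulr1.
Qed.

Lemma Ix_unit (R : realType) (X Y D : finType) (p : X -> Y -> D -> R) :
  (forall x y d, 0 <= p x y d) -> (\sum_x \sum_y \sum_d p x y d = 1) ->
  is_Ix p (fun _ : D => tt) (fun x _ _ (u : X) => if u == x then 1 else 0 : R)
    (entropy (px p)).
Proof.
move=> p0 p1.
have hdv : is_data_var (fun x (_ : Y) (_ : D) (u : X) => if u == x then 1 else 0 : R).
  move=> x y d; split; first by move=> u; case: ifP.
  by rewrite (sum_delta x (fun _ => 1)).
split; last by move=> Z qz hqz _; exact: Ix_le.
have henc : is_encoding (fun (_ : X) (_ : unit) => 1 : R).
  by move=> x; split => [t|]; [exact: ler01 | rewrite sum_unit].
exists (unit : finType), (fun _ _ => 1); split => //; first exact: indep_unit.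
set G := fun x (w : X * unit * unit) => if w.1.1 == x then px p x else 0.
have -> : px_ubz p (fun _ : D => tt) (fun x _ _ (u : X) => if u == x then 1 else 0 : R)
   (fun _ _ => 1) = G.
  apply: functional_extensionality => x; apply: functional_extensionality => -[[u []] []].
  rewrite /px_ubz /G /=; case: (eqVneq u x) => [ux|_]; first subst u.
    by rewrite /px; apply: eq_bigr => y _; apply: eq_bigr => d _; rewrite !mulr1.
  by rewrite big1 // => y _; rewrite big1 // => d _; rewrite mulr0 mul0r.
have hrow : forall x, \sum_w G x w = px p x.
  move=> x; rewrite (bigD1 ((x, tt), tt)) //= /G /= eqxx big1 ?addr0 //.
  by move=> -[[u []] []] /=; rewrite !xpair_eqE !eqxx !andbT => /negbTE ->.
have hcol : forall w, \sum_x G x w = px p w.1.1.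
  by move=> w; rewrite /G -big_mkcond (big_pred1 w.1.1) // => x; rewrite /= eq_sym.
rewrite /mutinfo /entropy -sumrN; apply: eq_bigr => x _.
rewrite hrow. symmetry.
transitivity (\sum_(w : X * unit * unit) (if w.1.1 == x then
   (if px p x == 0 then 0 else px p x * ln (px p x / (px p x * px p x))) else 0)).
  apply: eq_bigr => w _; rewrite hcol /G; case: (w.1.1 =P x) => [->|_] //.
  by rewrite eqxx.
rewrite (bigD1 ((x, tt), tt)) //= eqxx big1 ?addr0; last first.
  by move=> -[[u []] []] /=; rewrite !xpair_eqE !eqxx !andbT => /negbTE ->.
case: (eqVneq (px p x) 0) => [_|pn0]; first by rewrite oppr0.
have pp : 0 < px p x by rewrite lt_def pn0 sumr_ge0 // => y _; rewrite sumr_ge0.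
rewrite invfM mulrA mulfV // mul1r lnV ?posrE //.
by rewrite mulrN.
Qed.

Lemma Iy_unit (R : realType) (X Y D : finType) (p : X -> Y -> D -> R) :
  (forall x y d, 0 <= p x y d) -> (\sum_x \sum_y \sum_d p x y d = 1) ->
  is_Iy p (fun _ : D => tt) (mutinfo (pyx p)).
Proof.
move=> p0 p1.
split; last by move=> Z qz hqz _; exact: Iy_le.
have henc : is_encoding (fun (x : X) (z : X) => if z == x then 1 else 0 : R).
  move=> x; split; first by move=> u; case: ifP.
  by rewrite (sum_delta x (fun _ => 1)).
exists X, (fun x z => if z == x then 1 else 0); split => //; first exact: indep_unit.
congr mutinfo.
apply: functional_extensionality => y; apply: functional_extensionality => z.
rewrite /pyz /pyx -(sum_delta z (fun x => \sum_d p x y d)).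
apply: eq_bigr => x _; case: (x =P z) => [->|ne].
  by rewrite eqxx; apply: eq_bigr => d _; rewrite mulr1.
by rewrite big1 // => d _; case: (z =P x) => [e|_]; [case: ne | rewrite mulr0].
Qed.

Unset Implicit Arguments. Set Strict Implicit.
Theorem lemmaA1 (R : realType) (X Y D : finType) (p : X -> Y -> D -> R)
  (hp : is_pmf (fun t : X * Y * D => p t.1.1 t.1.2 t.2))
  (Bt U : finType) (f : D -> Bt) (qu : X -> Y -> D -> U -> R)
  (hqu : is_data_var qu) :
  is_domain_index p f qu ->
  is_Ix p f qu (entropy (px p)) /\ is_Iy p f (mutinfo (pyx p)).
Proof.
have p0 : forall x y d, 0 <= p x y d by move=> x y d; exact: (hp.1 (x, y, d)).
have p1 : \sum_x \sum_y \sum_d p x y d = 1.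
  by have := hp.2; rewrite sum_pair sum_pair.
move=> [vx [vy [[[Z0 [qz0 [e0 i0 ex]]] ubx] [[Z1 [qz1 [e1 i1 ey]]] uby] hmax]]].
have hdv : is_data_var (fun x (_ : Y) (_ : D) (u : X) => if u == x then 1 else 0 : R).
  move=> x y d; split; first by move=> u; case: ifP.
  by rewrite (sum_delta x (fun _ => 1)).
have h1 := hmax unit X (fun _ => tt) _ hdv _ _ (Ix_unit p0 p1) (Iy_unit p0 p1).
have h2 : vx <= entropy (px p) by rewrite ex; exact: Ix_le.
have h3 : vy <= mutinfo (pyx p) by rewrite ey; exact: Iy_le.
have Ex : vx = entropy (px p) by lra.
have Ey : vy = mutinfo (pyx p) by lra.
split; split.
- by exists Z0, qz0; split => //; rewrite -Ex.
- by move=> Z qz hqz hi; rewrite -Ex; exact: ubx.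
- by exists Z1, qz1; split => //; rewrite -Ey.
- by move=> Z qz hqz hi; rewrite -Ey; exact: uby.
Qed.
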